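(* Suppose $(G_i,N_i,\theta_i)_{\mathcal H}\ge_c(H_i,M_i,\varphi_i)_{\mathcal H}$ for $i=1,2$. Let $G=G_1\times G_2$, $H=H_1\times H_2$, $N=N_1\times N_2$, $M=M_1\times M_2$, $\theta=\theta_1\times\theta_2$ and $\varphi=\varphi_1\times\varphi_2$. Then $(G_{\theta^{\mathcal H}},N,\theta)_{\mathcal H}\ge_c(H_{\varphi^{\mathcal H}},M,\varphi)_{\mathcal H}$.
   Context: All groups are finite; $p$ is a fixed prime. $\mathbb Q^{\mathrm{ab}}\subseteq\mathbb C$ is generated by all roots of unity, $\mathcal G=\mathrm{Gal}(\mathbb Q^{\mathrm{ab}}/\mathbb Q)$, $\mathcal H\le\mathcal G$ consists of those $\sigma$ for which there is an integer $f$ with $\sigma(\xi)=\xi^{p^f}$ for all roots of unity $\xi$ of order prime to $p$. For $N\trianglelefteq G$, $\theta\in\mathrm{Irr}(N)$, $g\in G$, $\sigma\in\mathcal G$: $\theta^{g\sigma}(n)=\sigma(\theta(gng^{-1}))$; $A_\theta$ the stabilizer in $A\le G\times\mathcal G$; $\theta^{\mathcal H}$ the $\mathcal H$-orbit; $G_{\theta^{\mathcal H}}=\{g:\theta^g\in\theta^{\mathcal H}\}$. $(G,N,\theta)_{\mathcal H}$ is an $\mathcal H$-triple if $N\trianglelefteq G$, $\theta\in\mathrm{Irr}(N)$, $G_{\theta^{\mathcal H}}=G$. Projective representation $\mathcal P$ with factor set $\alpha$: $\mathcal P(x)\mathcal P(y)=\alpha(x,y)\mathcal P(xy)$. For $G$-invariant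 $\theta$, $\mathcal P$ is associated with $\theta$ if $\mathcal P_N$ affords $\theta$ and $\mathcal P(ng)=\mathcal P(n)\mathcal P(g)$, $\mathcal P(gn)=\mathcal P(g)\mathcal P(n)$. $\mathcal Q\sim\mu\mathcal P$ means $\mathcal Q(x)=\mu(x)M^{-1}\mathcal P(x)M$ for fixed invertible $M$. For $\mathcal P$ associated with $\theta$ on $G_\theta$ with entries in $\mathbb Q^{\mathrm{ab}}$ and $\theta^{x\sigma}=\theta$: $\mathcal P^{x\sigma}(y)=\sigma(\mathcal P(xyx^{-1}))$, and $\mu_{x\sigma}$ is the unique function $G_\theta\to\mathbb C^\times$, constant on $N$-cosets, $\mu_{x\sigma}(1)=1$, with $\mathcal P^{x\sigma}\sim\mu_{x\sigma}\mathcal P$. $(G,N,\theta)_{\mathcal H}\ge_c(H,M,\varphi)_{\mathcal H}$ (both $\mathcal H$-triples, $H\le G$) means: (i) $G=NH$, $N\cap H=M$, $\mathbf C_G(N)\subseteq H$; (ii) $(H\times\mathcal H)_\theta=(H\times\mathcal H)_\varphi$; (iii) there are projective representations $\mathcal P$ of $G_\theta$ associated with $\theta$ and $\mathcal P'$ of $H_\varphi$ associated with $\varphi$, entries in $\mathbb Q^{\mathrm{ab}}$, factor sets with root-of-unity values agreeing on $H_\theta\times H_\theta$, and $\mathcal P(c),\mathcal P'(c)$ the same scalar for all $c\in\mathbf C_G(N)$; (iv) $\mu_a=\mu'_a$ on $H_\theta$ for all $a\in(H\times\mathcal H)_\theta$. *)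

(* Defs.v *)
From HB Require Import structures.
From mathcomp Require Import all_boot all_order all_algebra all_fingroup all_solvable all_field all_character.
Set Implicit Arguments. Unset Strict Implicit. Unset Printing Implicit Defensive.
Import Order.TTheory GRing.Theory Num.Theory.
Local Open Scope group_scope.
Local Open Scope ring_scope.

(* Elements of Gal(Q^ab/Q) are represented by ring endomorphisms (= automorphisms)
   of algC; every such map restricts to an element of Gal(Q^ab/Q), and every element
   of Gal(Q^ab/Q) extends to one.  All notions below only depend on the restriction. *)
Notation galC := {rmorphism algC -> algC}.

Definition inQab (z : algC) : Prop :=
  exists (n : nat) (q : {poly rat}) (w : algC),
    (0 < n)%N /\ n.-primitive_root w /\ z = (map_poly ratr q).[w].

(* sigma is in the subgroup \mathcal H : there is an integer f with
   sigma(xi) = xi^(p^f) for every root of unity xi of order prime to p.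
   f >= 0 is the left disjunct, f = -e < 0 the right one. *)
Definition inHgal (p : nat) (u : galC) : Prop :=
  exists f : nat,
    (forall (n : nat) (xi : algC), (0 < n)%N -> coprime n p -> xi ^+ n = 1 ->
        u xi = xi ^+ (p ^ f)) \/
    (forall (n : nat) (xi : algC), (0 < n)%N -> coprime n p -> xi ^+ n = 1 ->
        xi = (u xi) ^+ (p ^ f)).

Section Defs.
Variable gT : finGroupType.
Implicit Types (G H N M S : {set gT}).

Definition fixes_char N (th : gT -> algC) (g : gT) (u : galC) : Prop :=
  forall n, n \in N -> u (th (g * n * g^-1)%g) = th n.

Definition in_Horbit (p : nat) N (th : gT -> algC) (g : gT) : Prop :=
  exists u : galC, inHgal p u /\
    forall n, n \in N -> th (g * n * g^-1)%g = u (th n).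

Definition char_stab G N (th : gT -> algC) : {set gT} :=
  [set g in G | [forall n in N, th (g * n * g^-1)%g == th n]].

Definition Htriple (p : nat) (G N : {group gT}) (t : Iirr N) : Prop :=
  N <| G /\ forall g, g \in G -> in_Horbit p N 'chi_t g.

Definition assoc_proj S N (th : gT -> algC) n (P : gT -> 'M[algC]_n)
    (alpha : gT -> gT -> algC) : Prop :=
  [/\ forall x, x \in S -> P x \in unitmx,
      forall x y, x \in S -> y \in S ->
        alpha x y != 0 /\ P x *m P y = alpha x y *: P (x * y)%g,
      P 1%g = 1%:M,
      forall x, x \in N -> \tr (P x) = th x &
      forall x g, x \in N -> g \in S ->
        P (x * g)%g = P x *m P g /\ P (g * x)%g = P g *m P x].

Definition is_mu S N n (P : gT -> 'M[algC]_n) (x : gT) (u : galC)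
    (mu : gT -> algC) : Prop :=
  [/\ forall y, y \in S -> mu y != 0,
      forall k y, k \in N -> y \in S -> mu (k * y)%g = mu y,
      mu 1%g = 1 &
      exists2 A : 'M[algC]_n, A \in unitmx &
        forall y, y \in S ->
          map_mx u (P (x * y * x^-1)%g) = mu y *: (invmx A *m P y *m A)].

Definition Hcgeq (p : nat) (G N : {group gT}) (t : Iirr N)
    (H M : {group gT}) (f : Iirr M) : Prop :=
  let th := 'chi_t in let ph := 'chi_f in
  let Gt := char_stab G N th in
  let Ht := char_stab H N th in
  let Hf := char_stab H M ph in
  [/\ @Htriple p G N t, @Htriple p H M f,
      (* (i) *)
      [/\ G :=: (N * H)%g, N :&: H = M & 'C_G(N) \subset H],
      (* (ii) *)
      (forall h (u : galC), h \in H -> inHgal p u ->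
          fixes_char N th h u <-> fixes_char M ph h u) &
      (* (iii) and (iv) *)
      exists (n n' : nat) (P : gT -> 'M[algC]_n) (P' : gT -> 'M[algC]_n')
             (alpha alpha' : gT -> gT -> algC),
        [/\ assoc_proj Gt N th P alpha /\
            assoc_proj Hf M ph P' alpha',
            (forall x i j, x \in Gt -> inQab (P x i j)) /\
            (forall x i j, x \in Hf -> inQab (P' x i j)),
            (forall x y, x \in Gt -> y \in Gt ->
               exists2 k : nat, (0 < k)%N & alpha x y ^+ k = 1) /\
            (forall x y, x \in Hf -> y \in Hf ->
               exists2 k : nat, (0 < k)%N & alpha' x y ^+ k = 1),
            (forall x y, x \in Ht -> y \in Ht -> alpha x y = alpha' x y) /\
            (forall c, c \in 'C_G(N) ->
               exists s : algC, P c = s%:M /\ P' c = s%:M) &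
            (forall h (u : galC), h \in H -> inHgal p u -> fixes_char N th h u ->
               exists mu mu' : gT -> algC,
                 [/\ is_mu Gt N P h u mu, is_mu Hf M P' h u mu' &
                     forall y, y \in Ht -> mu y = mu' y])]].

End Defs.

Arguments Htriple {gT} p G N t.
Arguments Hcgeq {gT} p G N t H M f.

(* Main.v *)
Require Import Defs.
From HB Require Import structures.
From mathcomp Require Import all_boot all_order all_algebra all_fingroup all_solvable all_field all_character.
From mathcomp Require Import mxtens.
Set Implicit Arguments. Unset Strict Implicit.
Import GRing.Theory Num.Theory.
Local Open Scope group_scope.
Local Open Scope ring_scope.
Lemma inQabM a b : inQab a -> inQab b -> inQab (a * b).
Proof.
move=> [n1 [q1 [w1 [n1p [pw1 ->]]]]] [n2 [q2 [w2 [n2p [pw2 ->]]]]].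
have n0: (0 < n1 * n2)%N by rewrite muln_gt0 n1p.
have [w pw] := C_prim_root_exists n0.
have pw1' := dvdn_prim_root pw (dvdn_mulr n2 (dvdnn n1)).
have pw2' := dvdn_prim_root pw (dvdn_mull n1 (dvdnn n2)).
have [i ->] := prim_rootP pw1' (prim_expr_order pw1).
have [j ->] := prim_rootP pw2' (prim_expr_order pw2).
exists (n1 * n2)%N, ((q1 \Po 'X^(n1 * n2 %/ n1 * i)) * (q2 \Po 'X^(n1 * n2 %/ n2 * j))), w.
split=> //; split=> //.
by rewrite rmorphM /= hornerM !map_comp_poly !horner_comp map_polyXn map_polyXn !hornerXn -!exprM.
Qed.

Section Tens.
Local Notation "A *t B" := (tensmx A B) (at level 40, left associativity).

Lemma tens_scalar m n (a b : algC) :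
  ((a%:M : 'M_m) *t (b%:M : 'M_n)) = (a * b)%:M.
Proof.
apply/matrixP=> i j; case: (mxtens_indexP i)=> i1 i2; case: (mxtens_indexP j)=> j1 j2.
rewrite tensmxE !mxE (can_eq (@mxtens_indexK m n)) xpair_eqE.
by case: (i1 == j1); case: (i2 == j2); rewrite ?mulr1n ?mulr0n ?mulr0 ?mul0r.
Qed.

Lemma tens1 m n : ((1%:M : 'M[algC]_m) *t (1%:M : 'M_n)) = 1%:M.
Proof. by rewrite tens_scalar mulr1. Qed.

Lemma tensZ m n p q (a b : algC) (A : 'M_(m, n)) (B : 'M_(p, q)) :
  (a *: A) *t (b *: B) = (a * b) *: (A *t B).
Proof. by apply/matrixP=> i j; rewrite !mxE mulrACA. Qed.

Lemma tens_tr m n (A : 'M[algC]_m) (B : 'M[algC]_n) : \tr (A *t B) = \tr A * \tr B.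
Proof.
rewrite /mxtrace (reindex (@mxtens_index m n)); last first.
  by exists (@mxtens_unindex m n) => k _; [apply: mxtens_indexK | apply: mxtens_unindexK].
rewrite mulr_suml (eq_bigr (fun i => \sum_j A i i * B j j)); last first.
  by move=> i _; rewrite mulr_sumr.
by rewrite pair_big /=; apply: eq_bigr => -[i j] _; rewrite tensmxE.
Qed.

Lemma tens_unit m n (A : 'M[algC]_m) (B : 'M[algC]_n) :
  A \in unitmx -> B \in unitmx ->
  A *t B \in unitmx /\ invmx (A *t B) = invmx A *t invmx B.
Proof.
move=> uA uB.
have e: (invmx A *t invmx B) *m (A *t B) = 1%:M by rewrite tensmx_mul !mulVmx // tens1.
have [u1 u2] := mulmx1_unit e; split=> //.
by rewrite -[invmx (A *t B)]mul1mx -e -mulmxA mulmxV // mulmx1.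
Qed.
End Tens.
Lemma fix_irr1 (gT : finGroupType) (G : {group gT}) (i : Iirr G) (u : galC) :
  u ('chi_i 1%g) = 'chi_i 1%g.
Proof. by rewrite irr1_degree rmorph_nat. Qed.

Lemma cfconj (gT : finGroupType) (G : {group gT}) (phi : 'CF(G)) g x :
  g \in G -> phi (g * x * g^-1)%g = phi x.
Proof. by move=> gG; have := cfunJ phi x (groupVr gG); rewrite conjgE invgK mulgA. Qed.

Lemma prod_cond (gT1 gT2 : finGroupType) (A1 : {group gT1}) (A2 : {group gT2})
   (th1 : gT1 -> algC) (th2 : gT2 -> algC) (th : gT1 * gT2 -> algC)
   (g : gT1 * gT2) (u v : galC) :
  u (th1 1%g) = th1 1%g -> v (th1 1%g) = th1 1%g -> th1 1%g != 0 ->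
  u (th2 1%g) = th2 1%g -> v (th2 1%g) = th2 1%g -> th2 1%g != 0 ->
  (forall x, th x = th1 x.1 * th2 x.2) ->
  (forall n, n \in setX A1 A2 -> u (th (g * n * g^-1)%g) = v (th n)) <->
  (forall n, n \in A1 -> u (th1 (g.1 * n * g.1^-1)%g) = v (th1 n)) /\
  (forall n, n \in A2 -> u (th2 (g.2 * n * g.2^-1)%g) = v (th2 n)).
Proof.
move=> u1 v1 nz1 u2 v2 nz2 eth; split.
- move=> H; split=> n nA.
  + have := H (n, 1%g); rewrite in_setX nA group1 => /(_ isT).
    rewrite !eth /= mulg1 mulgV !rmorphM /= u2 v2.
    by move/mulIf; apply.
  + have := H (1%g, n); rewrite in_setX nA group1 => /(_ isT).
    rewrite !eth /= mulg1 mulgV !rmorphM /= u1 v1.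
    by move/mulfI; apply.
- move=> [H1 H2] [n1 n2]; rewrite in_setX => /andP[a b].
  by rewrite !eth /= !rmorphM /= H1 // H2.
Qed.

Lemma prod_fix (gT1 gT2 : finGroupType) (A1 : {group gT1}) (A2 : {group gT2})
   (i1 : Iirr A1) (i2 : Iirr A2) (th : gT1 * gT2 -> algC) (g : gT1 * gT2) (u : galC) :
  (forall x, th x = 'chi_i1 x.1 * 'chi_i2 x.2) ->
  fixes_char (setX A1 A2) th g u <->
  fixes_char A1 'chi_i1 g.1 u /\ fixes_char A2 'chi_i2 g.2 u.
Proof.
move=> eth.
have := @prod_cond _ _ A1 A2 'chi_i1 'chi_i2 th g u idfun (@fix_irr1 _ _ i1 u) (@fix_irr1 _ _ i1 idfun)
   (irr1_neq0 i1) (@fix_irr1 _ _ i2 u) (@fix_irr1 _ _ i2 idfun) (irr1_neq0 i2) eth.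
by move=> e; split=> [/e|/e].
Qed.

Lemma orbit_fix (gT : finGroupType) (A : {set gT}) (th : gT -> algC) g (u : galC) :
  (forall n, n \in A -> th (g * n * g^-1)%g = u (th n)) <->
  fixes_char A th g (algC_invaut u).
Proof.
split=> H n nA.
  rewrite H //; exact: algC_autK.
rewrite -(H n nA); symmetry; exact: algC_invautK.
Qed.

Lemma inHgal_id p : inHgal p idfun.
Proof. by exists 0%N; left=> n xi _ _ _; rewrite expn0 expr1. Qed.

Lemma inHgal_inv p (u : galC) : inHgal p u -> inHgal p (algC_invaut u).
Proof.
case=> f [H|H]; exists f.
  right=> n xi n0 cop e.
  have e' : (algC_invaut u xi) ^+ n = 1 by rewrite -rmorphXn /= e rmorph1.
  by rewrite -(H n _ n0 cop e') algC_invautK.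
left=> n xi n0 cop e.
have e' : (algC_invaut u xi) ^+ n = 1 by rewrite -rmorphXn /= e rmorph1.
apply: etrans (H n _ n0 cop e') _; congr (_ ^+ _); exact: algC_invautK.
Qed.

Lemma orbit_iff p (gT : finGroupType) (A : {set gT}) (th : gT -> algC) g :
  in_Horbit p A th g <-> exists u, inHgal p u /\ fixes_char A th g u.
Proof.
split=> [[u [uH /orbit_fix e]]|[u [uH e]]].
  by exists (algC_invaut u); split=> //; apply: inHgal_inv.
exists (algC_invaut u); split; first exact: inHgal_inv.
move=> n nA; rewrite -(e n nA); symmetry; exact: algC_autK.
Qed.

Lemma stabP (gT : finGroupType) (G A : {set gT}) (th : gT -> algC) g :
  g \in char_stab G A th <-> g \in G /\ fixes_char A th g idfun.
Proof.
rewrite inE; split=> [/andP[a /forall_inP b]|[a b]].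
  by split=> // n /b /eqP.
by rewrite a; apply/forall_inP => n /b /= ->.
Qed.

Lemma fix_orbit p (gT : finGroupType) (A : {set gT}) (th : gT -> algC) g :
  fixes_char A th g idfun -> in_Horbit p A th g.
Proof. by move=> H; exists idfun; split; [apply: inHgal_id | move=> n /H]. Qed.

Lemma memX (T1 T2 : finType) (A1 : {set T1}) (A2 : {set T2}) (x : T1 * T2) :
  (x \in setX A1 A2) = (x.1 \in A1) && (x.2 \in A2).
Proof. by case: x => a b; rewrite in_setX. Qed.

Lemma assoc_prod (gT1 gT2 : finGroupType) (S1 A1 : {set gT1}) (S2 A2 : {set gT2})
  (S A : {set (gT1 * gT2)}) (th1 : gT1 -> algC) (th2 : gT2 -> algC) (th : gT1 * gT2 -> algC)
  n1 n2 (P1 : gT1 -> 'M[algC]_n1) (P2 : gT2 -> 'M[algC]_n2) a1 a2 :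
  assoc_proj S1 A1 th1 P1 a1 -> assoc_proj S2 A2 th2 P2 a2 ->
  (forall x, x \in S -> x.1 \in S1 /\ x.2 \in S2) ->
  (forall x, x \in A -> x.1 \in A1 /\ x.2 \in A2) ->
  (forall x, th x = th1 x.1 * th2 x.2) ->
  assoc_proj S A th (fun x => tensmx (P1 x.1) (P2 x.2))
    (fun x y => a1 x.1 y.1 * a2 x.2 y.2).
Proof.
case=> [u1 m1 o1 t1 l1] [u2 m2 o2 t2 l2] hS hA eth; split.
- by move=> x /hS[x1 x2]; case: (tens_unit (u1 _ x1) (u2 _ x2)).
- move=> x y /hS[x1 x2] /hS[y1 y2].
  have [nz1 e1] := m1 _ _ x1 y1; have [nz2 e2] := m2 _ _ x2 y2.
  by split; [rewrite mulf_neq0 | rewrite tensmx_mul e1 e2 tensZ].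
- by rewrite /= o1 o2 tens1.
- by move=> x /hA[x1 x2]; rewrite tens_tr t1 // t2 // eth.
- move=> x g /hA[x1 x2] /hS[g1 g2].
  have [e1 e1'] := l1 _ _ x1 g1; have [e2 e2'] := l2 _ _ x2 g2.
  by rewrite /= e1 e2 e1' e2' !tensmx_mul.
Qed.

Lemma is_mu_prod (gT1 gT2 : finGroupType) (S1 A1 : {set gT1}) (S2 A2 : {set gT2})
  (S A : {set (gT1 * gT2)}) n1 n2 (P1 : gT1 -> 'M[algC]_n1) (P2 : gT2 -> 'M[algC]_n2)
  (x : gT1 * gT2) (u : galC) mu1 mu2 :
  is_mu S1 A1 P1 x.1 u mu1 -> is_mu S2 A2 P2 x.2 u mu2 ->
  (forall x, x \in S -> x.1 \in S1 /\ x.2 \in S2) ->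
  (forall x, x \in A -> x.1 \in A1 /\ x.2 \in A2) ->
  is_mu S A (fun y => tensmx (P1 y.1) (P2 y.2)) x u (fun y => mu1 y.1 * mu2 y.2).
Proof.
case=> [z1 k1 o1 [B1 uB1 e1]] [z2 k2 o2 [B2 uB2 e2]] hS hA; split.
- by move=> y /hS[y1 y2]; rewrite mulf_neq0 ?z1 ?z2.
- by move=> k y /hA[a b] /hS[c d]; rewrite /= k1 // k2.
- by rewrite /= o1 o2 mulr1.
- have [uB iB] := tens_unit uB1 uB2.
  exists (tensmx B1 B2) => // y /hS[y1 y2].
  by rewrite map_mxT /= e1 // e2 // tensZ iB !tensmx_mul.
Qed.
Unset Implicit Arguments.
Set Strict Implicit.
Theorem lemma2p5 (p : nat) (gT1 gT2 : finGroupType)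
    (G1 N1 H1 M1 : {group gT1}) (t1 : Iirr N1) (f1 : Iirr M1)
    (G2 N2 H2 M2 : {group gT2}) (t2 : Iirr N2) (f2 : Iirr M2)
    (t : Iirr (setX N1 N2)) (f : Iirr (setX M1 M2)) :
  prime p ->
  Hcgeq p G1 N1 t1 H1 M1 f1 ->
  Hcgeq p G2 N2 t2 H2 M2 f2 ->
  (forall x : gT1 * gT2, 'chi_t x = 'chi_t1 x.1 * 'chi_t2 x.2) ->
  (forall x : gT1 * gT2, 'chi_f x = 'chi_f1 x.1 * 'chi_f2 x.2) ->
  forall GT HT : {group (gT1 * gT2)},
    (forall g, g \in GT <-> g \in setX G1 G2 /\ in_Horbit p (setX N1 N2) 'chi_t g) ->
    (forall h, h \in HT <-> h \in setX H1 H2 /\ in_Horbit p (setX M1 M2) 'chi_f h) ->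
    Hcgeq p GT (setX N1 N2) t HT (setX M1 M2) f.
Proof.
move=> _ HC1 HC2 eth eph GT HT hGT hHT.
case: HC1 => [[nN1 orb1] [nM1 orbM1] [eG1 eNH1 sC1] ii1
  [n1 [n1' [P1 [P1' [a1 [a1' [[pa1 pa1'] [q1 q1'] [r1 r1'] [e1 c1] iv1]]]]]]]].
case: HC2 => [[nN2 orb2] [nM2 orbM2] [eG2 eNH2 sC2] ii2
  [n2 [n2' [P2 [P2' [a2 [a2' [[pa2 pa2'] [q2 q2'] [r2 r2'] [e2 c2] iv2]]]]]]]].
have fixT g u : fixes_char (setX N1 N2) 'chi_t g u <->
    fixes_char N1 'chi_t1 g.1 u /\ fixes_char N2 'chi_t2 g.2 u by apply: prod_fix.
have fixF g u : fixes_char (setX M1 M2) 'chi_f g u <->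
    fixes_char M1 'chi_f1 g.1 u /\ fixes_char M2 'chi_f2 g.2 u by apply: prod_fix.
have iiP h u : h \in setX H1 H2 -> inHgal p u ->
    (fixes_char (setX N1 N2) 'chi_t h u <-> fixes_char (setX M1 M2) 'chi_f h u).
  rewrite memX => /andP[h1 h2] uH; split.
    by case/fixT => a b; apply/fixF; split; [apply/ii1 | apply/ii2].
  by case/fixF => a b; apply/fixT; split; [apply/ii1 | apply/ii2].
have HtoG h : h \in setX H1 H2 ->
    (in_Horbit p (setX M1 M2) 'chi_f h <-> in_Horbit p (setX N1 N2) 'chi_t h).
  move=> hH; split.
    by case/orbit_iff => u [uH fu]; apply/orbit_iff; exists u; split=> //; apply/iiP.
  by case/orbit_iff => u [uH fu]; apply/orbit_iff; exists u; split=> //; apply/iiP.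
have sMH1 : M1 \subset H1 by rewrite -eNH1 subsetIr.
have sMH2 : M2 \subset H2 by rewrite -eNH2 subsetIr.
have sMN1 : M1 \subset N1 by rewrite -eNH1 subsetIl.
have sMN2 : M2 \subset N2 by rewrite -eNH2 subsetIl.
have sHG1 : H1 \subset G1 by rewrite eG1 mulG_subr.
have sHG2 : H2 \subset G2 by rewrite eG2 mulG_subr.
have sNG1 : N1 \subset G1 := normal_sub nN1.
have sNG2 : N2 \subset G2 := normal_sub nN2.
have sHTH h : h \in HT -> h \in setX H1 H2 by case/hHT.
have sGTG g : g \in GT -> g \in setX G1 G2 by case/hGT.
have sNGT : setX N1 N2 \subset GT.
  apply/subsetP => n nN; apply/hGT; split.
    by move: nN; rewrite !memX => /andP[a b]; rewrite (subsetP sNG1) ?(subsetP sNG2).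
  by apply: fix_orbit => m _; rewrite /= cfconj.
have sMHT : setX M1 M2 \subset HT.
  apply/subsetP => n nM; apply/hHT; split.
    by move: nM; rewrite !memX => /andP[a b]; rewrite (subsetP sMH1) ?(subsetP sMH2).
  by apply: fix_orbit => m _; rewrite /= cfconj.
have sMN : setX M1 M2 \subset setX N1 N2 by rewrite setXS.
have sHTGT : HT \subset GT.
  apply/subsetP => h hHT'; have [hH ho] := hHT h; case: (hH hHT') => hH' ho'.
  apply/hGT; split; last by apply/HtoG.
  by move: hH'; rewrite !memX => /andP[a b]; rewrite (subsetP sHG1) ?(subsetP sHG2).
have normX (A1 B1 : {group gT1}) (A2 B2 : {group gT2}) :
    A1 <| B1 -> A2 <| B2 -> forall g, g \in setX B1 B2 -> g \in 'N(setX A1 A2).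
  move=> nA1 nA2 g; rewrite memX => /andP[g1 g2]; rewrite inE; apply/subsetP => y.
  rewrite mem_conjg !memX /= => /andP[y1 y2].
  have {y1}y1 : (y.1 ^ g.1^-1)%g \in A1 := y1.
  have {y2}y2 : (y.2 ^ g.2^-1)%g \in A2 := y2.
  rewrite memJ_norm ?groupV ?(subsetP (normal_norm nA1)) // in y1.
  by rewrite memJ_norm ?groupV ?(subsetP (normal_norm nA2)) // in y2; rewrite y1 y2.
have HtG : Htriple p GT (setX N1 N2) t.
  split; last by move=> g /hGT[].
  by rewrite /normal sNGT; apply/subsetP => g /sGTG; apply: normX.
have HtH : Htriple p HT (setX M1 M2) f.
  split; last by move=> g /hHT[].
  rewrite /normal sMHT; apply/subsetP => g /sHTH; apply: normX.
  exact: nM1. exact: nM2.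
have Ccomp c : c \in 'C_GT(setX N1 N2) -> c.1 \in 'C_G1(N1) /\ c.2 \in 'C_G2(N2).
  case/setIP => cGT /centP cN.
  have [cG1 cG2] : c.1 \in G1 /\ c.2 \in G2.
    by move: (sGTG _ cGT); rewrite memX => /andP[].
  split.
    rewrite inE cG1; apply/centP => n nN.
    have nN' : (n, 1%g) \in setX N1 N2 by rewrite in_setX nN group1.
    by have := cN _ nN'; move/(congr1 fst).
  rewrite inE cG2; apply/centP => n nN.
  have nN' : (1%g, n) \in setX N1 N2 by rewrite in_setX nN group1.
  by have := cN _ nN'; move/(congr1 snd).
have cond_i : [/\ GT :=: (setX N1 N2 * HT)%g, setX N1 N2 :&: HT = setX M1 M2
    & 'C_GT(setX N1 N2) \subset HT].
  split.
  - apply/eqP; rewrite eqEsubset mul_subG ?sNGT ?sHTGT // andbT.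
    apply/subsetP => g gGT; have [gG go] := (hGT g).1 gGT.
    move: gG; rewrite memX => /andP[g1 g2].
    rewrite eG1 in g1; rewrite eG2 in g2.
    case/mulsgP: g1 => x1 h1 x1N h1H e1g; case/mulsgP: g2 => x2 h2 x2N h2H e2g.
    have eg : g = ((x1, x2) * (h1, h2))%g by case: g e1g e2g {gGT go} => a b /= -> ->.
    have xN : (x1, x2) \in setX N1 N2 by rewrite in_setX x1N x2N.
    have hH : (h1, h2) \in setX H1 H2 by rewrite in_setX h1H h2H.
    apply/mulsgP; exists (x1, x2) (h1, h2) => //.
    apply/hHT; split=> //; apply/HtoG => //.
    case: go => u [uH eu]; exists u; split=> // m mN.
    have -> : (h1, h2) = ((x1, x2)^-1 * g)%g by rewrite eg mulKg.
    set x := (x1, x2).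
    have -> : ((x^-1 * g) * m * (x^-1 * g)^-1 = x^-1 * (g * m * g^-1) * x^-1^-1)%g.
      by rewrite invMg !mulgA.
    by rewrite cfconj ?groupV // eu.
  - apply/eqP; rewrite eqEsubset subsetI sMN sMHT /= andbT.
    apply/subsetP => x /setIP[xN /sHTH xH]; move: xN xH.
    by rewrite !memX => /andP[a b] /andP[c d]; rewrite -eNH1 -eNH2 !inE a b c d.
  - apply/subsetP => c /setIP[cGT /centP cN].
    have [cG1 cG2] : c.1 \in G1 /\ c.2 \in G2.
      by move: (sGTG _ cGT); rewrite memX => /andP[].
    have cc1 : c.1 \in 'C_G1(N1).
      rewrite inE cG1; apply/centP => n nN.
      have nN' : (n, 1%g) \in setX N1 N2 by rewrite in_setX nN group1.
      by have := cN _ nN'; move/(congr1 fst).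
    have cc2 : c.2 \in 'C_G2(N2).
      rewrite inE cG2; apply/centP => n nN.
      have nN' : (1%g, n) \in setX N1 N2 by rewrite in_setX nN group1.
      by have := cN _ nN'; move/(congr1 snd).
    apply/hHT; split; first by rewrite memX (subsetP sC1 _ cc1) (subsetP sC2 _ cc2).
    by apply: fix_orbit => m mM /=; rewrite (cN m (subsetP sMN _ mM)) mulgK.
have GtP x : x \in char_stab GT (setX N1 N2) 'chi_t ->
    x.1 \in char_stab G1 N1 'chi_t1 /\ x.2 \in char_stab G2 N2 'chi_t2.
  move=> /stabP[xG /fixT[fx1 fx2]]; move: (sGTG _ xG); rewrite memX => /andP[a b].
  by split; apply/stabP; split.
have HtP x : x \in char_stab HT (setX N1 N2) 'chi_t ->
    x.1 \in char_stab H1 N1 'chi_t1 /\ x.2 \in char_stab H2 N2 'chi_t2.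
  move=> /stabP[xG /fixT[fx1 fx2]]; move: (sHTH _ xG); rewrite memX => /andP[a b].
  by split; apply/stabP; split.
have HfP x : x \in char_stab HT (setX M1 M2) 'chi_f ->
    x.1 \in char_stab H1 M1 'chi_f1 /\ x.2 \in char_stab H2 M2 'chi_f2.
  move=> /stabP[xG /fixF[fx1 fx2]]; move: (sHTH _ xG); rewrite memX => /andP[a b].
  by split; apply/stabP; split.
have NP x : x \in setX N1 N2 -> x.1 \in N1 /\ x.2 \in N2 by rewrite memX => /andP.
have MP x : x \in setX M1 M2 -> x.1 \in M1 /\ x.2 \in M2 by rewrite memX => /andP.
split=> //.
  by move=> h u hHT' uH; apply: iiP => //; apply: sHTH.
exists (n1 * n2)%N, (n1' * n2')%N, (fun x => tensmx (P1 x.1) (P2 x.2)),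
  (fun x => tensmx (P1' x.1) (P2' x.2)), (fun x y => a1 x.1 y.1 * a2 x.2 y.2),
  (fun x y => a1' x.1 y.1 * a2' x.2 y.2).
split.
- split; [exact: assoc_prod pa1 pa2 GtP NP eth | exact: assoc_prod pa1' pa2' HfP MP eph].
- split=> x i j xS.
    have [x1 x2] := GtP _ xS.
    case: (mxtens_indexP i) => i1 i2; case: (mxtens_indexP j) => j1 j2.
    by rewrite tensmxE; apply: inQabM; [apply: q1 | apply: q2].
  have [x1 x2] := HfP _ xS.
  case: (mxtens_indexP i) => i1 i2; case: (mxtens_indexP j) => j1 j2.
  by rewrite tensmxE; apply: inQabM; [apply: q1' | apply: q2'].
- split=> x y xS yS.
    have [x1 x2] := GtP _ xS; have [y1 y2] := GtP _ yS.
    have [k1 k1p ek1] := r1 _ _ x1 y1; have [k2 k2p ek2] := r2 _ _ x2 y2.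
    exists (k1 * k2)%N; first by rewrite muln_gt0 k1p.
    by rewrite exprMn {1}exprM ek1 expr1n mul1r mulnC exprM ek2 expr1n.
  have [x1 x2] := HfP _ xS; have [y1 y2] := HfP _ yS.
  have [k1 k1p ek1] := r1' _ _ x1 y1; have [k2 k2p ek2] := r2' _ _ x2 y2.
  exists (k1 * k2)%N; first by rewrite muln_gt0 k1p.
  by rewrite exprMn {1}exprM ek1 expr1n mul1r mulnC exprM ek2 expr1n.
- split.
    move=> x y xH yH; have [x1 x2] := HtP _ xH; have [y1 y2] := HtP _ yH.
    by rewrite /= e1 // e2.
  move=> c /Ccomp [cc1 cc2].
  have [s1 [es1 es1']] := c1 _ cc1; have [s2 [es2 es2']] := c2 _ cc2.
  by exists (s1 * s2); rewrite /= es1 es2 es1' es2' !tens_scalar.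
- move=> h u hHT' uH /fixT [fx1 fx2].
  move: (sHTH _ hHT'); rewrite memX => /andP[h1 h2].
  have [mu1 [mu1' [m1 m1' ag1]]] := iv1 _ _ h1 uH fx1.
  have [mu2 [mu2' [m2 m2' ag2]]] := iv2 _ _ h2 uH fx2.
  exists (fun y => mu1 y.1 * mu2 y.2), (fun y => mu1' y.1 * mu2' y.2); split.
  + exact: is_mu_prod m1 m2 GtP NP.
  + exact: is_mu_prod m1' m2' HfP MP.
  + by move=> y /HtP[y1 y2]; rewrite /= ag1 // ag2.
Qed.
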